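(* Let $\mathbb{F}_q$ be a finite field of characteristic $p$, let $r,v,k,t$ be positive integers, and let $f(x):=x^r h_k(x^v)^t$ where $h_k(x):=x^{k-1}+x^{k-2}+\dots+1$. Let $s:=\gcd(v,q-1)$, $d:=(q-1)/s$ and $e:=v/s$. Suppose that $\gcd(r,s)=\gcd(d,k)=1$, that $\gcd(d,2r+vt(k-1))\le 2$, that $k^{st}\equiv (-1)^{(d+1)(r+1)}\pmod{p}$, and that $d$ is an odd prime. Pick $\omega\in\mathbb{F}_q$ of order $d$. Consider the condition \[( * )\qquad \frac{\zeta^k-\zeta^{-k}}{\zeta-\zeta^{-1}}\in\mu_{st}\ \text{ for every } \zeta\in\mu_d\setminus\mu_1.\] Then: (a) If $( * )$ holds then $f$ permutes $\mathbb{F}_q$. (b) If $d=3$ then $f$ permutes $\mathbb{F}_q$. (c) If $d=5$ then $f$ permutes $\mathbb{F}_q$ if and only if $( * )$ holds. (d) If $d=7$ then $f$ permutes $\mathbb{F}_q$ if and only if either $( * )$ holds or there exists $\epsilon\in\{1,-1\}$ such that \[\left(\frac{\omega^{ike}-\omega^{-ike}}{\omega^{ie}-\omega^{-ie}}\right)^{st}=\omega^{2\epsilon(2r+(k-1)vt)i}\] for every $i\in\{1,2,4\}$. (e) If $d=11$ then $f$ permutes $\mathbb{F}_q$ if and only if either $( * )$ holds or there is some $\psi\in\mathcal{C}$ such that \[\left(\frac{\omega^{ike}-\omega^{-ike}}{\omega^{ie}-\omega^{-ie}}\right)^{st}=\omega^{(2r+(k-1)vt)\psi(i)}\] for every $i\in(\mathbb{F}_{11}^*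 )^2$, where $\mathcal{C}$ is the union of the sets $\{i\mapsto mi : m\in\{\pm3,\pm5\}\}$, $\{i\mapsto 5m^3i^4+m^7i^3-2mi^2-4m^5i : m\in\mathbb{F}_{11}^*\}$ and $\{i\mapsto 4m^3i^4+m^7i^3-2mi^2-5m^5i : m\in\mathbb{F}_{11}^*\}$ (functions $\mathbb{F}_{11}\to\mathbb{F}_{11}$).
   Context: $\mu_n$ denotes the set of $n$-th roots of unity in $\mathbb{F}_q$ (so $\mu_1=\{1\}$). Since $\omega$ has order $d$, $\omega^a$ is well defined for $a\in\mathbb{Z}/d\mathbb{Z}=\mathbb{F}_d$, and integers $i$ are identified with their residues mod $d$. A polynomial permutes $\mathbb{F}_q$ if the induced map is a bijection. *)

(* Defs.v *)
From HB Require Import structures.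
From mathcomp Require Import all_boot all_order all_algebra all_field.
Set Implicit Arguments. Unset Strict Implicit. Unset Printing Implicit Defensive.
Import GRing.Theory.
Local Open Scope ring_scope.

Definition hk {R : nzRingType} (k : nat) : {poly R} := \sum_(i < k) 'X^i.

Definition fpoly {R : comNzRingType} (r v k t : nat) : {poly R} :=
  'X^r * ((hk k) \Po 'X^v) ^+ t.

Definition permutes {F : finFieldType} (P : {poly F}) : Prop :=
  bijective (fun x : F => P.[x]).

Definition mu {F : fieldType} (n : nat) (x : F) : Prop := x ^+ n = 1.

Definition star_cond {F : fieldType} (d k n : nat) : Prop :=
  forall z : F, mu d z -> ~ mu 1 z ->
    mu n ((z ^+ k - z ^- k) / (z - z^-1)).

Definition C11 (psi : 'F_11 -> 'F_11) : Prop :=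
  (exists m : 'F_11, (m = 3 \/ m = -3 \/ m = 5 \/ m = -5) /\
      psi = (fun i => m * i)) \/
  (exists m : 'F_11, m != 0 /\
      psi = (fun i => 5 * m ^+ 3 * i ^+ 4 + m ^+ 7 * i ^+ 3
                      - 2 * m * i ^+ 2 - 4 * m ^+ 5 * i)) \/
  (exists m : 'F_11, m != 0 /\
      psi = (fun i => 4 * m ^+ 3 * i ^+ 4 + m ^+ 7 * i ^+ 3
                      - 2 * m * i ^+ 2 - 5 * m ^+ 5 * i)).

Definition nzsq11 (i : 'F_11) : Prop := exists j : 'F_11, j != 0 /\ i = j ^+ 2.

(* Main.v *)
Require Import Defs.
From HB Require Import structures.
From mathcomp Require Import all_boot all_order all_algebra all_field.
From mathcomp Require Import all_fingroup all_solvable.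
From mathcomp Require Import zify ring.
Import GRing.Theory.


Definition phi (d E : nat) (b : nat -> nat) (i : nat) := (i * E + b i) %% d.
Definition injb d E b :=
  all (fun i => all (fun j => (phi d E b i == phi d E b j) ==> (i == j)) (iota 0 d)) (iota 0 d).

Lemma injbP d E b :
  reflect (forall i j, i < d -> j < d -> phi d E b i = phi d E b j -> i = j) (injb d E b).
Proof.
apply: (iffP allP) => [H i j id jd e|H i]; last first.
  rewrite mem_iota /= add0n => id; apply/allP => j; rewrite mem_iota add0n /= => jd.
  by apply/implyP => /eqP e; apply/eqP; apply: H.
have := H i; rewrite mem_iota add0n => /(_ id) /allP /(_ j).
by rewrite mem_iota add0n => /(_ jd) /implyP /(_ (introT eqP e)) /eqP.
Qed.

Lemma injb_eq d E E' b b' : E %% d = E' %% d ->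
  (forall i, i < d -> b i %% d = b' i %% d) -> injb d E b = injb d E' b'.
Proof.
move=> hE hb.
have hp i : i < d -> phi d E b i = phi d E' b' i.
  move=> id; have h1 : i * E = i * E' %[mod d] by rewrite -modnMmr hE modnMmr.
  by rewrite /phi -modnDml h1 modnDml -modnDmr hb // modnDmr.
apply/injbP/injbP => H i j id jd; [rewrite -!hp //|rewrite !hp //]; exact: H.
Qed.

Lemma injb0 d E : prime d -> E %% d != 0 -> injb d E (fun _ => 0).
Proof.
move=> pd hE; apply/injbP => i j id jd; rewrite /phi !addn0 => /eqP.
wlog le: i j id jd / j <= i.
  move=> W; case: (leqP j i) => [|/ltnW] h; first exact: W.
  by rewrite eq_sym => /(W _ _ jd id h) ->.
rewrite eqn_mod_dvd ?leq_mul2r ?le ?orbT // -mulnBl Euclid_dvdM //.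
case/orP => [hd|]; last by rewrite /dvdn (negbTE hE).
have : i - j < d by rewrite (leq_ltn_trans (leq_subr _ _)).
move: hd; case H: (i - j) => [|n]; first by move=> _ _; lia.
by move=> /(dvdn_leq (ltn0Sn n)) h1 h2; lia.
Qed.

Definition l5 x1 x2 := [:: 0; x1; x2; x2; x1].
Definition l7 x1 x2 x4 := [:: 0; x1; x2; x4; x4; x2; x1].
Definition l11 x1 x3 x4 x5 x9 := [:: 0; x1; x9; x3; x4; x5; x5; x4; x3; x9; x1].

Definition chk5 := all (fun E => all (fun x1 => all (fun x2 =>
  injb 5 E (nth 0 (l5 x1 x2)) ==> (x1 == 0) && (x2 == 0)) (iota 0 5)) (iota 0 5)) (iota 0 5).
Lemma chk5_true : chk5. Proof. by vm_compute. Qed.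

Definition cond7 E x1 x2 x4 :=
  [&& x1 == 0, x2 == 0 & x4 == 0] ||
  [&& x1 == (2 * E * 1) %% 7, x2 == (2 * E * 2) %% 7 & x4 == (2 * E * 4) %% 7] ||
  [&& (x1 + 2 * E * 1) %% 7 == 0, (x2 + 2 * E * 2) %% 7 == 0 & (x4 + 2 * E * 4) %% 7 == 0].
Definition chk7 := all (fun E => all (fun x1 => all (fun x2 => all (fun x4 =>
  injb 7 E (nth 0 (l7 x1 x2 x4)) == cond7 E x1 x2 x4) (iota 0 7)) (iota 0 7)) (iota 0 7)) (iota 1 6).
Lemma chk7_true : chk7. Proof. by vm_compute. Qed.

Definition tbl11 : seq (seq nat) := [:: [:: 3; 9; 1; 4; 5]; [:: 8; 2; 10; 7; 6]; [:: 5; 4; 9; 3; 1]; [:: 6; 7; 2; 8; 10]; [:: 0; 6; 9; 1; 6]; [:: 3; 6; 3; 0; 10]; [:: 2; 2; 0; 3; 4]; [:: 5; 0; 3; 7; 7]; [:: 9; 4; 10; 10; 0]; [:: 2; 7; 1; 1; 0]; [:: 6; 0; 8; 4; 4]; [:: 9; 9; 0; 8; 7]; [:: 8; 5; 8; 0; 1]; [:: 0; 5; 2; 10; 5]; [:: 9; 10; 2; 9; 3]; [:: 7; 10; 5; 10; 1]; [:: 7; 1; 3; 8; 3]; [:: 6; 5; 5; 9; 8]; [:: 4; 7; 5; 2; 4]; [:: 7; 4; 6; 9; 7]; [:: 5; 6; 6; 2; 3]; [:: 4; 10; 8; 3; 8]; [:: 4; 1; 6; 1; 10]; [:: 2; 1;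 9; 2; 8]].

(* row matching: row lists psi at squares 1,3,4,5,9 *)
Definition match11 E (row : seq nat) x1 x3 x4 x5 x9 :=
  [:: x1; x3; x4; x5; x9] == map (fun y => (E * y) %% 11) row.
Definition cond11 E x1 x3 x4 x5 x9 :=
  [&& x1 == 0, x3 == 0, x4 == 0, x5 == 0 & x9 == 0] ||
  has (fun row => match11 E row x1 x3 x4 x5 x9) tbl11.

Definition v11 E i x := (i*E + x) %% 11.
Definition chk11 := all (fun E => all (fun x1 =>
  if uniq [:: 0; v11 E 1 x1; v11 E 10 x1] then all (fun x9 =>
  if uniq [:: 0; v11 E 1 x1; v11 E 10 x1; v11 E 2 x9; v11 E 9 x9] then all (fun x3 =>
  if uniq [:: 0; v11 E 1 x1; v11 E 10 x1; v11 E 2 x9; v11 E 9 x9; v11 E 3 x3; v11 E 8 x3] then all (fun x4 =>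
  if uniq [:: 0; v11 E 1 x1; v11 E 10 x1; v11 E 2 x9; v11 E 9 x9; v11 E 3 x3; v11 E 8 x3; v11 E 4 x4; v11 E 7 x4] then all (fun x5 =>
  if uniq [:: 0; v11 E 1 x1; v11 E 10 x1; v11 E 2 x9; v11 E 9 x9; v11 E 3 x3; v11 E 8 x3; v11 E 4 x4; v11 E 7 x4; v11 E 5 x5; v11 E 6 x5] then cond11 E x1 x3 x4 x5 x9 else true)
  (iota 0 11) else true) (iota 0 11) else true) (iota 0 11) else true) (iota 0 11) else true) (iota 0 11)) (iota 0 11).
Lemma chk11_true : chk11. Proof. by vm_compute. Qed.

Definition chk11b := all (fun E => all (fun row =>
  injb 11 E (nth 0 (l11 (E * nth 0 row 0 %% 11) (E * nth 0 row 1 %% 11) (E * nth 0 row 2 %% 11)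
     (E * nth 0 row 3 %% 11) (E * nth 0 row 4 %% 11)))) tbl11) (iota 1 10).
Lemma chk11b_true : chk11b. Proof. by vm_compute. Qed.

Lemma uniq_catl (T : eqType) (s1 s2 : seq T) : uniq (s1 ++ s2) -> uniq s1.
Proof. by rewrite cat_uniq => /and3P[]. Qed.
Arguments uniq_catl {T s1 s2}.

Lemma injb_uniq d E b (ix : seq nat) : injb d E b -> all (fun i => i < d) ix -> uniq ix ->
  uniq (map (phi d E b) ix).
Proof.
move=> /injbP H /allP A U; rewrite map_inj_in_uniq // => i j hi hj; apply: H; exact: A.
Qed.

Lemma mem_iota0 n i : i < n -> i \in iota 0 n.
Proof. by rewrite mem_iota add0n. Qed.
Arguments mem_iota0 {n i}.

Section Comb.
Variables (d : nat) (b : nat -> nat).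
Hypothesis Hb0 : b 0 = 0.
Hypothesis Hlt : forall i, b i < d.
Hypothesis Hsym : forall i, 0 < i < d -> b (d - i) = b i.

Lemma comb5 E : d = 5 -> injb d E b -> forall i, 0 < i < d -> b i = 0.
Proof.
move=> d5; subst d.
have -> : injb 5 E b = injb 5 (E %% 5) (nth 0 (l5 (b 1) (b 2))).
  apply: injb_eq; first by rewrite modn_mod.
  case=> [|[|[|[|[|i]]]]] // _; rewrite /= ?Hb0 //.
    by rewrite -[3]/(5 - 2) Hsym.
  by rewrite -[4]/(5 - 1) Hsym.
move=> I; have := chk5_true; move=> /allP /(_ (E %% 5)) /(_ (mem_iota0 (ltn_pmod E (isT : 0 < 5)))).
move=> /allP /(_ (b 1) (mem_iota0 (Hlt 1))) /allP /(_ (b 2) (mem_iota0 (Hlt 2))).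
rewrite I /= => /andP[/eqP h1 /eqP h2].
case=> [|[|[|[|[|i]]]]] //= _; first by rewrite -[3]/(5 - 2) Hsym.
by rewrite -[4]/(5 - 1) Hsym.
Qed.

Lemma comb7 E : d = 7 -> E %% 7 != 0 -> injb d E b = cond7 (E %% 7) (b 1) (b 2) (b 4).
Proof.
move=> d7 hE; subst d.
have -> : injb 7 E b = injb 7 (E %% 7) (nth 0 (l7 (b 1) (b 2) (b 4))).
  apply: injb_eq; first by rewrite modn_mod.
  case=> [|[|[|[|[|[|[|i]]]]]]] // _; rewrite /= ?Hb0 //.
    by rewrite -[3]/(7 - 4) Hsym.
    by rewrite -[5]/(7 - 2) Hsym.
  by rewrite -[6]/(7 - 1) Hsym.
have := chk7_true => /allP /(_ (E %% 7)).
rewrite mem_iota; have := ltn_pmod E (isT : 0 < 7); move: hE; case: (E %% 7) => // E' _ hlt.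
move=> /(_ (andb_true_intro (conj isT hlt))).
move=> /allP /(_ (b 1) (mem_iota0 (Hlt 1))) /allP /(_ (b 2) (mem_iota0 (Hlt 2))).
by move=> /allP /(_ (b 4) (mem_iota0 (Hlt 4))) /eqP.
Qed.

Lemma nth_l11 : d = 11 -> forall i, i < 11 ->
   b i %% 11 = nth 0 (l11 (b 1) (b 3) (b 4) (b 5) (b 9)) i %% 11.
Proof.
move=> d11; subst d.
case=> [|[|[|[|[|[|[|[|[|[|[|i]]]]]]]]]]] // _; rewrite /= ?Hb0 //.
- by rewrite -[2]/(11 - 9) Hsym.
- by rewrite -[6]/(11 - 5) Hsym.
- by rewrite -[7]/(11 - 4) Hsym.
- by rewrite -[8]/(11 - 3) Hsym.
- by rewrite -[10]/(11 - 1) Hsym.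
Qed.

Lemma comb11 E : d = 11 -> injb d E b -> cond11 (E %% 11) (b 1) (b 3) (b 4) (b 5) (b 9).
Proof.
move=> d11; have N := nth_l11 d11; subst d.
rewrite (@injb_eq 11 E (E %% 11) b _ (esym (modn_mod _ _)) N).
set E' := E %% 11; set x1 := b 1; set x3 := b 3; set x4 := b 4; set x5 := b 5; set x9 := b 9.
move=> /(@injb_uniq _ _ _ [:: 0; 1; 10; 2; 9; 3; 8; 4; 7; 5; 6]) /(_ isT isT) U5.
have hE : E' \in iota 0 11 by apply: mem_iota0; apply: ltn_pmod.
have := chk11_true => /allP /(_ E' hE) /allP /(_ x1 (mem_iota0 (Hlt 1))).
rewrite (uniq_catl (U5 : uniq ([:: 0; v11 E' 1 x1; v11 E' 10 x1] ++ _))).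
move=> /allP /(_ x9 (mem_iota0 (Hlt 9))).
rewrite (uniq_catl (U5 : uniq ([:: 0; v11 E' 1 x1; v11 E' 10 x1; v11 E' 2 x9; v11 E' 9 x9] ++ _))).
move=> /allP /(_ x3 (mem_iota0 (Hlt 3))).
rewrite (uniq_catl (U5 : uniq ([:: 0; v11 E' 1 x1; v11 E' 10 x1; v11 E' 2 x9; v11 E' 9 x9; v11 E' 3 x3; v11 E' 8 x3] ++ _))).
move=> /allP /(_ x4 (mem_iota0 (Hlt 4))).
rewrite (uniq_catl (U5 : uniq ([:: 0; v11 E' 1 x1; v11 E' 10 x1; v11 E' 2 x9; v11 E' 9 x9; v11 E' 3 x3; v11 E' 8 x3; v11 E' 4 x4; v11 E' 7 x4] ++ _))).
move=> /allP /(_ x5 (mem_iota0 (Hlt 5))).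
by rewrite (U5 : uniq [:: 0; v11 E' 1 x1; v11 E' 10 x1; v11 E' 2 x9; v11 E' 9 x9; v11 E' 3 x3; v11 E' 8 x3; v11 E' 4 x4; v11 E' 7 x4; v11 E' 5 x5; v11 E' 6 x5]).
Qed.

Lemma comb11b E row : d = 11 -> E %% 11 != 0 -> row \in tbl11 ->
  match11 (E %% 11) row (b 1) (b 3) (b 4) (b 5) (b 9) -> injb d E b.
Proof.
move=> d11 hE hrow; have N := nth_l11 d11; subst d.
rewrite (@injb_eq 11 E (E %% 11) b _ (esym (modn_mod _ _)) N).
have : all (fun r => size r == 5) tbl11 by [].
move=> /allP /(_ _ hrow); case: row hrow => [|r0 [|r1 [|r2 [|r3 [|r4 [|]]]]]] //= hrow _.
rewrite /match11 /= => /eqP [-> -> -> -> ->].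
have := ltn_pmod E (isT : 0 < 11); move: hE; case: (E %% 11) => // E' _ hlt.
have := chk11b_true => /allP /(_ E'.+1); rewrite mem_iota.
by move=> /(_ (andb_true_intro (conj isT hlt))) /allP /(_ _ hrow).
Qed.

End Comb.


Local Open Scope ring_scope.


Lemma F11_nat (m : 'F_11) : ((val m)%:R : 'F_11) = m.
Proof. exact: natr_Zp. Qed.

Lemma F11_all (P : pred 'F_11) : all P (map (fun n => n%:R) (iota 0 11)) -> forall m, P m.
Proof.
move=> /allP h m; rewrite -[m]F11_nat; apply: h; apply: map_f.
rewrite mem_iota add0n; exact: (ltn_ord m).
Qed.

Definition psiA (m : 'F_11) := fun i : 'F_11 => m * i.
Definition psiB (m : 'F_11) := (fun i : 'F_11 => 5 * m ^+ 3 * i ^+ 4 + m ^+ 7 * i ^+ 3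
                      - 2 * m * i ^+ 2 - 4 * m ^+ 5 * i).
Definition psiC (m : 'F_11) := (fun i : 'F_11 => 4 * m ^+ 3 * i ^+ 4 + m ^+ 7 * i ^+ 3
                      - 2 * m * i ^+ 2 - 5 * m ^+ 5 * i).
Definition rowOf (psi : 'F_11 -> 'F_11) : seq nat :=
  [:: val (psi 1); val (psi 3); val (psi 4); val (psi 5); val (psi 9)].

Definition chkA := all (fun m : 'F_11 => rowOf (psiA m) \in tbl11) [:: 3; -3; 5; -5].
Lemma chkA_true : chkA. Proof. by vm_compute. Qed.
Definition chkB := all (fun m : 'F_11 => (m != 0) ==> (rowOf (psiB m) \in tbl11)) (map (fun n => n%:R) (iota 0 11)).
Lemma chkB_true : chkB. Proof. by vm_compute. Qed.
Definition chkC := all (fun m : 'F_11 => (m != 0) ==> (rowOf (psiC m) \in tbl11)) (map (fun n => n%:R) (iota 0 11)).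
Lemma chkC_true : chkC. Proof. by vm_compute. Qed.

Lemma C11_tbl psi : C11 psi -> rowOf psi \in tbl11.
Proof.
case=> [[m [hm ->]]|[[m [m0 ->]]|[m [m0 ->]]]].
- have := chkA_true => /allP /(_ m); apply.
  by rewrite !inE; case: hm => [->|[->|[->|->]]]; rewrite eqxx ?orbT.
- by have := F11_all _ chkB_true m => /implyP /(_ m0).
- by have := F11_all _ chkC_true m => /implyP /(_ m0).
Qed.

Definition chkT := all (fun row =>
  has (fun m : 'F_11 => rowOf (psiA m) == row) [:: 3; -3; 5; -5] ||
  has (fun m : 'F_11 => (m != 0) && (rowOf (psiB m) == row)) (map (fun n => n%:R) (iota 0 11)) ||
  has (fun m : 'F_11 => (m != 0) && (rowOf (psiC m) == row)) (map (fun n => n%:R) (iota 0 11))) tbl11.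
Lemma chkT_true : chkT. Proof. by vm_compute. Qed.

Lemma tbl_C11 row : row \in tbl11 -> exists psi, C11 psi /\ rowOf psi = row.
Proof.
move=> hr; have := chkT_true => /allP /(_ _ hr) /orP[/orP[|]|].
- case/hasP => m hm /eqP <-; exists (psiA m); split => //; left; exists m; split => //.
  by move: hm; rewrite !inE => /orP[/eqP->|/orP[/eqP->|/orP[/eqP->|/eqP->]]]; auto.
- case/hasP => m _ /andP[m0 /eqP <-]; exists (psiB m); split => //; right; left; exists m; split => //.
- case/hasP => m _ /andP[m0 /eqP <-]; exists (psiC m); split => //; right; right; exists m; split => //.
Qed.

Definition sq11 : seq 'F_11 := [:: 1; 3; 4; 5; 9].
Definition chkS := all (fun j : 'F_11 => (j != 0) ==> (j ^+ 2 \in sq11)) (map (fun n => n%:R) (iota 0 11)).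
Lemma chkS_true : chkS. Proof. by vm_compute. Qed.

Lemma nzsq_sq i : nzsq11 i -> i \in sq11.
Proof. by case=> j [j0 ->]; have := F11_all _ chkS_true j => /implyP /(_ j0). Qed.

Lemma sq_nzsq i : i \in sq11 -> nzsq11 i.
Proof.
rewrite !inE => /orP[/eqP->|/orP[/eqP->|/orP[/eqP->|/orP[/eqP->|/eqP->]]]].
- by exists 1; split; [|rewrite expr1n].
- by exists 5; split; apply/eqP; vm_compute.
- by exists 2; split; apply/eqP; vm_compute.
- by exists 4; split; apply/eqP; vm_compute.
- by exists 3; split; apply/eqP; vm_compute.
Qed.



Definition Rf {F : fieldType} (k : nat) (z : F) := (z ^+ k - z ^- k) / (z - z^-1).

Lemma horner_hk {R : comNzRingType} k (x : R) : (hk k).[x] = \sum_(i < k) x ^+ i.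
Proof. by rewrite /hk horner_sum; apply: eq_bigr => i _; rewrite hornerXn. Qed.

Lemma horner_f {R : comNzRingType} r v k t (x : R) :
  (fpoly r v k t).[x] = x ^+ r * (\sum_(i < k) (x ^+ v) ^+ i) ^+ t.
Proof. by rewrite /fpoly hornerM hornerXn horner_exp horner_comp hornerXn horner_hk. Qed.

Lemma geom_R {F : fieldType} k (z : F) : (0 < k)%N -> z != 0 -> z ^+ 2 != 1 ->
  \sum_(i < k) (z ^+ 2) ^+ i = z ^+ k.-1 * Rf k z.
Proof.
move=> k0 z0 z21.
have h1 : z ^+ 2 - 1 != 0 by rewrite subr_eq0.
apply: (mulIf h1); rewrite mulrC -subrX1 -exprM.
case: k k0 => // m _; rewrite /Rf /=.
rewrite mulnC exprM !(exprSr z m).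
have w0 : z ^+ m != 0 by rewrite expf_neq0.
set w := z ^+ m.
have h3 : z ^+ 2 - 1 = z * (z - z^-1) by rewrite mulrBr mulfV // expr2.
have h2 : z - z^-1 != 0 by apply: contraNneq h1; rewrite h3 => ->; rewrite mulr0.
rewrite h3; field.
by rewrite z0 w0 -expr2 h1.
Qed.

Lemma Rf_inv {F : fieldType} k (z : F) : Rf k z^-1 = Rf k z.
Proof.
rewrite /Rf (invrK z) exprVn invrK -[z^-1 - z]opprB -[z ^- k - _]opprB.
by rewrite invrN mulrNN.
Qed.

Section Main.
Variable F : finFieldType.
Variables (r v k t : nat) (omega : F).
Local Notation n := (#|F|.-1).
Local Notation s := (gcdn v #|F|.-1).
Local Notation d := (#|F|.-1 %/ gcdn v #|F|.-1)%N.
Local Notation e := (v %/ gcdn v #|F|.-1)%N.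
Local Notation E := (2 * r + v * t * (k - 1))%N.
Local Notation f := (fpoly (R := F) r v k t).
Hypothesis r0 : (0 < r)%N.
Hypothesis v0 : (0 < v)%N.
Hypothesis k0 : (0 < k)%N.
Hypothesis t0 : (0 < t)%N.
Hypothesis pd : prime d.
Hypothesis od : odd d.
Hypothesis pom : d.-primitive_root omega.
Hypothesis K1 : (k%:R : F) ^+ (s * t) = 1.

Lemma n_gt0 : (0 < n)%N.
Proof.
have : (1 < #|F|)%N by apply/card_gt1P; exists 0, 1; rewrite !inE eq_sym oner_neq0.
by case: #|F| => [|[|]].
Qed.

Lemma s_gt0 : (0 < s)%N. Proof. by rewrite gcdn_gt0 v0. Qed.
Lemma d_gt0 : (0 < d)%N. Proof. exact: prime_gt0. Qed.
Lemma sd : (s * d)%N = n. Proof. by rewrite mulnC divnK // dvdn_gcdr. Qed.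
Lemma ve : v = (e * s)%N. Proof. by rewrite divnK // dvdn_gcdl. Qed.

Lemma cop_ed : coprime e d.
Proof.
have h : (gcdn e d * s)%N = s by rewrite muln_gcdl -ve [(d * s)%N]mulnC sd.
by rewrite /coprime -(eqn_pmul2r s_gt0) h mul1n.
Qed.

Lemma unit_pow (x : F) : x != 0 -> x ^+ n = 1.
Proof.
have hF : (0 < #|F|)%N by move: n_gt0; case: #|F|.
by move=> x0; apply: (mulIf x0); rewrite mul1r -exprSr prednK ?expf_card.
Qed.

Lemma surjs (y : F) : y ^+ d = 1 -> exists x : F, x != 0 /\ x ^+ s = y.
Proof.
move=> yd.
have : has n.-primitive_root (enum (predC1 (0 : F))).
  apply: has_prim_root n_gt0 _ (enum_uniq _) _.
    by apply/allP => x; rewrite mem_enum /= => x0; rewrite unity_rootE unit_pow.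
  by rewrite -cardE cardC1.
case/hasP => g; rewrite mem_enum /= => g0 pg.
have pgs : d.-primitive_root (g ^+ s).
  have dn : (d %| n)%N by rewrite -[in X in (_ %| X)%N]sd dvdn_mull.
  have := dvdn_prim_root pg dn.
  have -> : (n %/ d = s)%N.
    have := sd; have := d_gt0; move: (d) => D D0 h.
    by rewrite -[X in (X %/ D)%N]h mulnK.
  by [].
case: (prim_rootP pgs yd) => j ->.
by exists (g ^+ j); rewrite exprAC expf_neq0.
Qed.

Definition dlog (y : F) : nat :=
  if [pick j : 'I_d | y == omega ^+ j] is Some j then val j else 0%N.

Lemma dlog_lt y : (dlog y < d)%N.
Proof. by rewrite /dlog; case: pickP => [j _|_]; [exact: ltn_ord | exact: d_gt0]. Qed.

Lemma dlogP y : y ^+ d = 1 -> y = omega ^+ dlog y.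
Proof.
move=> yd; rewrite /dlog; case: pickP => [j /eqP //|none].
by case: (prim_rootP pom yd) => j hj; have := none j; rewrite hj eqxx.
Qed.

Lemma om_exp_eq (i j : nat) : (omega ^+ i == omega ^+ j) = (i == j %[mod d]).
Proof. exact: eq_prim_root_expr. Qed.

Lemma om_pow_eq1 (i : nat) : (omega ^+ i == 1) = (d %| i)%N.
Proof. by rewrite (prim_order_dvd pom). Qed.

Lemma zeta_ne1 (i : nat) : (0 < i < d)%N -> omega ^+ (i * e) ^+ 2 != 1.
Proof.
move=> /andP[i0 id]; rewrite -exprM om_pow_eq1 -mulnA.
rewrite Euclid_dvdM // negb_or; apply/andP; split.
  by apply/negP => /(dvdn_leq i0); rewrite leqNgt id.
rewrite Euclid_dvdM // negb_or; apply/andP; split.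
  have : coprime e d := cop_ed.
  rewrite coprime_sym prime_coprime //.
apply/negP => /(dvdn_leq (isT : (0 < 2)%N)) h2.
by move: od; have : (d <= 2)%N := h2; case: d pd => [|[|[|]]].
Qed.

Lemma ve' : v = (s * e)%N. Proof. by rewrite mulnC -ve. Qed.

Lemma om0 : omega != 0.
Proof.
apply/eqP => h; have := prim_expr_order pom; rewrite h expr0n.
by have := d_gt0; case: (d) => // D _ /= /eqP; rewrite eq_sym oner_eq0.
Qed.

Lemma ve'' (x : F) : x ^+ v = (x ^+ s) ^+ e.
Proof. by rewrite -exprM -ve'. Qed.

Definition b (i : nat) : nat := dlog (Rf k (omega ^+ (i * e)) ^+ (s * t)).
Definition bb (i : nat) : nat := if i == 0%N then 0%N else b i.
Definition GOOD (i : nat) := Rf k (omega ^+ (i * e)) ^+ (s * t) = omega ^+ b i.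

Lemma b_lt i : (b i < d)%N. Proof. exact: dlog_lt. Qed.
Lemma bb_lt i : (bb i < d)%N. Proof. by rewrite /bb; case: eqP => _; [exact: d_gt0 | exact: b_lt]. Qed.

Lemma om_inv i : (0 < i < d)%N -> omega ^+ ((d - i) * e) = (omega ^+ (i * e))^-1.
Proof.
move=> /andP[_ /ltnW id]; apply: (mulIf (expf_neq0 (i * e) om0)).
rewrite (mulVf (expf_neq0 (i*e) om0)).
by rewrite -exprD -mulnDl subnK // exprM (prim_expr_order pom) expr1n.
Qed.

Lemma b_sym i : (0 < i < d)%N -> b (d - i) = b i.
Proof. by move=> h; rewrite /b om_inv // Rf_inv. Qed.

Lemma bb_sym i : (0 < i < d)%N -> bb (d - i) = bb i.
Proof.
move=> h; have := h; case/andP => i0 id; rewrite /bb b_sym //.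
have -> : (d - i == 0)%N = false by rewrite subn_eq0 leqNgt id.
by have -> : (i == 0)%N = false by case: (i) i0.
Qed.

Lemma key (x : F) (i : nat) : (i < d)%N -> x ^+ s = omega ^+ (2 * i) ->
  ((0 < i)%N -> GOOD i) -> f.[x] ^+ s = omega ^+ (i * E + bb i).
Proof.
move=> id hx hg; rewrite horner_f exprMn exprAC hx.
have hv : x ^+ v = (omega ^+ (i * e)) ^+ 2.
  by rewrite -[v]/v ve'' hx -!exprM; congr (omega ^+ _); ring.
have ht : forall y : F, (y ^+ t) ^+ s = y ^+ (s * t) by move=> y; rewrite -exprM mulnC.
rewrite hv ht.
case: (posnP i) => [i0|i0].
  subst i; rewrite /bb /= !mul0n expr0 !expr1n.
  rewrite (eq_bigr (fun _ => 1)) => [|j _]; last by rewrite expr1n.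
  by rewrite sumr_const card_ord mul1r K1.
rewrite geom_R ?expf_neq0 ?om0 ?zeta_ne1 ?i0 //.
rewrite exprMn hg // /bb; have -> : (i == 0%N) = false by case: (i) i0.
rewrite -!exprM -!exprD; congr (omega ^+ _).
have := ve'; move: (s) (e) => s0 e0 hv'; rewrite hv' subn1; ring.
Qed.

Lemma mu_d_2i (y : F) : y ^+ d = 1 -> exists2 i, (i < d)%N & y = omega ^+ (2 * i).
Proof.
move=> yd; case: (prim_rootP pom yd) => j ->.
have h2 : (2 * (d.+1)./2 = d.+1)%N.
  have := odd_double_half d.+1; rewrite /= od /= add0n => h.
  by rewrite -[RHS]h -muln2 mulnC.
exists ((j * (d.+1)./2) %% d)%N; first exact: ltn_pmod _ d_gt0.
apply/eqP; rewrite eq_sym om_exp_eq modnMmr mulnA [(2 * j)%N]mulnC -mulnA h2.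
by rewrite mulnS addnC modnMDl.
Qed.

Lemma mus (x : F) : x != 0 -> (x ^+ s) ^+ d = 1.
Proof. by move=> x0; rewrite -exprM sd unit_pow. Qed.

Lemma f0 : f.[0] = 0.
Proof. by rewrite horner_f expr0n; case: (r) r0 => // r' _; rewrite mul0r. Qed.

Lemma copr_one (z : F) : coprime r s -> z ^+ r = 1 -> z ^+ s = 1 -> z = 1.
Proof.
move=> cp zr zs; case: (Bezoutl s r0) => a _.
rewrite (eqP cp) => /dvdnP [m hm].
have : z ^+ (1 + a * s) = z ^+ (m * r) by rewrite hm.
by rewrite exprD expr1 [(a * s)%N]mulnC exprM zs expr1n mulr1 [(m * r)%N]mulnC exprM zr expr1n.
Qed.

Lemma ord_surj_inj {D : nat} {P : 'I_D -> 'I_D} (D0 : (0 < D)%N) :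
  (forall j, exists i, P i = j) -> injective P.
Proof.
move=> sur.
pose g j := odflt (Ordinal D0) [pick i | P i == j].
have hg : cancel g P.
  move=> j; rewrite /g; case: pickP => [i /eqP //|none].
  by case: (sur j) => i hi; have := none i; rewrite hi eqxx.
have [g' gg' g'g] := injF_bij (can_inj hg).
have ee : forall x, P x = g' x by move=> x; rewrite -{1}[x]g'g hg.
by move=> x y h; apply: (can_inj g'g); rewrite -!ee.
Qed.

Lemma coreR : coprime r s -> (forall i, (0 < i < d)%N -> GOOD i) -> injb d E bb ->
  bijective (fun x : F => f.[x]).
Proof.
move=> cp good /injbP inj; apply: injF_bij => x x'.
have keyx : forall y : F, y != 0 -> exists2 i, (i < d)%N &
    (y ^+ s = omega ^+ (2 * i) /\ f.[y] ^+ s = omega ^+ (i * E + bb i)).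
  move=> y y0; have [i id hi] := mu_d_2i _ (mus _ y0).
  by exists i => //; split => //; apply: key => // i0; apply: good; rewrite i0.
have fnz : forall y : F, y != 0 -> f.[y] != 0.
  move=> y y0; have [i _ [_ h]] := keyx y y0.
  by apply: contra_neq (expf_neq0 (i * E + bb i) om0) => h0; rewrite -h h0 expr0n; case: (s) s_gt0.
case: (eqVneq x 0) => [->|x0]; case: (eqVneq x' 0) => [->//|x'0].
- by rewrite f0 => /esym/eqP; rewrite (negbTE (fnz _ x'0)).
- by rewrite f0 => /eqP; rewrite (negbTE (fnz _ x0)).
move=> h.
have [i id [hi fi]] := keyx x x0; have [j jd [hj fj]] := keyx x' x'0.
have ij : i = j.
  apply: inj => //; rewrite /phi; apply/eqP; rewrite -om_exp_eq -fi -fj h //.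
subst j.
pose z := x' / x.
have ex' : x' = z * x by rewrite /z mulfVK.
have zs : z ^+ s = 1 by rewrite /z exprMn exprVn hi hj mulfV // expf_neq0 ?om0.
clearbody z.
have hzv : (z * x) ^+ v = x ^+ v by rewrite exprMn (ve'' z) zs expr1n mul1r.
have zr : z ^+ r = 1.
  apply: (mulIf (fnz _ x0)); rewrite mul1r [in RHS]h ex' !horner_f hzv.
  by rewrite exprMn mulrA.
by rewrite ex' (copr_one _ cp zr zs) mul1r.
Qed.

Lemma good_of_nz i : Rf k (omega ^+ (i * e)) != 0 -> GOOD i.
Proof.
move=> h; apply: dlogP; rewrite -exprM.
have -> : (s * t * d = s * d * t)%N by ring.
by rewrite sd exprM unit_pow // expr1n.
Qed.

Lemma coreL : bijective (fun x : F => f.[x]) ->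
  (forall i, (0 < i < d)%N -> GOOD i) /\ injb d E bb.
Proof.
move=> fb; have finj := bij_inj fb.
have fnz : forall y : F, y != 0 -> f.[y] != 0.
  by move=> y y0; apply: contra_neq y0 => h; apply: finj; rewrite /= h f0.
have good : forall i, (0 < i < d)%N -> GOOD i.
  move=> i /andP[i0 id]; apply: good_of_nz.
  have [c [c0 hc]] : exists c : F, c != 0 /\ c ^+ s = omega ^+ (2 * i).
    by apply: surjs; rewrite exprAC (prim_expr_order pom) expr1n.
  have := fnz c c0; rewrite horner_f.
  have hv : c ^+ v = (omega ^+ (i * e)) ^+ 2.
    by rewrite (ve'' c) hc -!exprM; congr (omega ^+ _); ring.
  rewrite hv geom_R ?expf_neq0 ?om0 ?zeta_ne1 ?i0 ?id //.
  by apply: contra_neq => ->; rewrite mulr0 expr0n; case: (t) t0 => // t' _; rewrite mulr0.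
split => //.
pose P (i : 'I_d) : 'I_d := Ordinal (ltn_pmod (i * E + bb i) d_gt0).
have Psurj : forall j, exists i, P i = j.
  move=> j.
  have [c [c0 hc]] : exists c : F, c != 0 /\ c ^+ s = omega ^+ j.
    by apply: surjs; rewrite exprAC (prim_expr_order pom) expr1n.
  case: fb => g fg gf.
  have a0 : g c != 0 by apply: contra_neq c0 => h; rewrite -[c]gf h f0.
  have [i id hi] := mu_d_2i _ (mus _ a0).
  exists (Ordinal id); apply: val_inj => /=.
  have := key _ _ id hi (fun i0 => good i (andb_true_intro (conj i0 id))).
  by rewrite gf hc => /eqP; rewrite om_exp_eq (modn_small (ltn_ord j)) => /eqP ->.
have Pinj := ord_surj_inj d_gt0 Psurj.
apply/injbP => i j id jd h.
have : P (Ordinal id) = P (Ordinal jd) by apply: val_inj.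
by move/Pinj => [].
Qed.

Lemma d_gt2 : (2 < d)%N.
Proof. by move: od; have := prime_gt1 pd; case: (d) => [|[|[|]]]. Qed.

Lemma Emod (HE : (gcdn d E <= 2)%N) : (E %% d != 0)%N.
Proof.
apply/negP => hd; have dE : (d %| E)%N := hd.
by move: HE; rewrite (gcdn_idPl dE) leqNgt d_gt2.
Qed.

Lemma star_iff : star_cond (F := F) d k (s * t) <->
  (forall i, (0 < i < d)%N -> Rf k (omega ^+ (i * e)) ^+ (s * t) = 1).
Proof.
split => [st i hi|h z zd z1].
  apply: st; first by rewrite /mu exprAC (prim_expr_order pom) expr1n.
  by rewrite /mu expr1 => h1; have := zeta_ne1 _ hi; rewrite h1 expr1n eqxx.
have pe : d.-primitive_root (omega ^+ e) by rewrite prim_root_exp_coprime // cop_ed.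
case: (prim_rootP pe zd) => i hz.
have i0 : (0 < i)%N.
  by case: i hz => [[|i'] ?] //= hz; case: z1; rewrite /mu hz expr0 expr1.
have hz' : z = omega ^+ (i * e) by rewrite hz -exprM mulnC.
by rewrite /mu hz'; apply: h; rewrite i0 ltn_ord.
Qed.

Lemma good_star : star_cond (F := F) d k (s * t) ->
  forall i, (0 < i < d)%N -> GOOD i /\ b i = 0%N.
Proof.
move=> /star_iff h i hi.
have g : GOOD i by apply: dlogP; rewrite (h i hi) expr1n.
split => //; move: g; rewrite /GOOD (h i hi) => /eqP; rewrite eq_sym om_pow_eq1 => hd.
by apply/eqP; rewrite -(modn_small (b_lt i)); apply/eqP/eqP; rewrite -/(dvdn _ _).
Qed.

Lemma partA (HE : (gcdn d E <= 2)%N) : coprime r s ->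
  star_cond (F := F) d k (s * t) -> bijective (fun x : F => f.[x]).
Proof.
move=> cp st; have gs := good_star st.
apply: (coreR cp (fun i hi => (gs i hi).1)).
rewrite (@injb_eq d E E bb (fun _ => 0%N)) //; first exact: injb0 pd (Emod HE).
move=> i id; rewrite /bb; case: eqP => // /eqP i0.
by rewrite (gs i _).2 // lt0n i0 id.
Qed.

Lemma sq_odd (w : F) : w ^+ 2 = 1 -> w ^+ d = 1 -> w = 1.
Proof.
move=> w2 wd; have := odd_double_half d; rewrite od => hd.
by move: wd; rewrite -hd exprD expr1 -muln2 mulnC exprM w2 expr1n mulr1.
Qed.

Lemma m1s : (-1 : F) ^+ s = 1.
Proof.
apply: sq_odd; first by rewrite exprAC sqrrN expr1n expr1n.
by rewrite -exprM sd unit_pow // oppr_eq0 oner_eq0.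
Qed.

Lemma star3 : d = 3%N -> coprime d k -> star_cond (F := F) d k (s * t).
Proof.
move=> d3 cdk; apply/star_iff => i hi.
have z2 := zeta_ne1 _ hi.
set z := omega ^+ (i * e) in z2 *.
have z0 : z != 0 by rewrite expf_neq0 // om0.
have z3 : z ^+ 3 = 1 by rewrite -d3 exprAC (prim_expr_order pom) expr1n.
have zz : z - z^-1 != 0.
  apply: contra_neq z2 => h; have e1 : z = z^-1 by apply/eqP; rewrite -subr_eq0 h.
  by rewrite expr2 {1}e1 mulVf.
have hk : z ^+ k = z ^+ (k %% 3) by rewrite (expr_mod _ z3).
have hk3 : (k %% 3 = 1 \/ k %% 3 = 2)%N.
  have : ~~ (3 %| k)%N by move: cdk; rewrite d3 prime_coprime.
  rewrite /dvdn; have : (k %% 3 < 3)%N by rewrite ltn_mod.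
  move: (k %% 3)%N => m.
  by case: m => [|[|[|]]] //; auto.
rewrite /Rf hk.
case: hk3 => ->; first by rewrite expr1 divff // expr1n.
have h2 : z ^+ 2 = z^-1 by apply: (mulIf z0); rewrite -exprSr z3 mulVf.
by rewrite h2 invrK -opprB mulNr divff // exprM m1s expr1n.
Qed.

Lemma bb0 : bb 0 = 0%N. Proof. by []. Qed.

Lemma star_of_b0 : (forall i, (0 < i < d)%N -> GOOD i) ->
  (forall i, (0 < i < d)%N -> bb i = 0%N) -> star_cond (F := F) d k (s * t).
Proof.
move=> good h0; apply/star_iff => i hi; rewrite (good i hi).
have := h0 i hi; rewrite /bb; case: eqP => [i0|_ ->]; last by rewrite expr0.
by move: hi; rewrite i0.
Qed.

Lemma partC (HE : (gcdn d E <= 2)%N) : d = 5%N -> coprime r s ->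
  bijective (fun x : F => f.[x]) <-> star_cond (F := F) d k (s * t).
Proof.
move=> d5 cp; split; last exact: partA.
move=> /coreL [good inj]; apply: star_of_b0 => // i hi.
exact: (comb5 _ _ bb0 bb_lt bb_sym E d5 inj).
Qed.

Lemma lhs_eq (i : nat) :
  ((omega ^+ (i * k * e) - omega ^- (i * k * e)) / (omega ^+ (i * e) - omega ^- (i * e))) ^+ (s * t)
  = Rf k (omega ^+ (i * e)) ^+ (s * t).
Proof. by rewrite /Rf -exprM mulnAC. Qed.

Lemma good_bb i : (0 < i < d)%N -> GOOD i -> Rf k (omega ^+ (i * e)) ^+ (s * t) = omega ^+ bb i.
Proof. by move=> /andP[i0 _] ->; rewrite /bb; case: eqP i0 => // ->. Qed.

Lemma Rf_sym_nz i : (0 < i < d)%N -> Rf k (omega ^+ ((d - i) * e)) = Rf k (omega ^+ (i * e)).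
Proof. by move=> h; rewrite om_inv // Rf_inv. Qed.

Lemma nz_of_eq i m : Rf k (omega ^+ (i * e)) ^+ (s * t) = omega ^+ m -> Rf k (omega ^+ (i * e)) != 0.
Proof.
move=> h; apply/eqP => h0; move: h; rewrite h0 expr0n.
have st0 : (s * t)%N != 0%N by rewrite -lt0n muln_gt0 s_gt0 t0.
rewrite (negbTE st0) /= => /esym /eqP; rewrite expf_eq0 (negbTE om0) andbF.
done.
Qed.

Lemma exp_eq_mod a c : omega ^+ a = omega ^+ c <-> (a %% d = c %% d)%N.
Proof. by split => [/eqP|h]; [rewrite om_exp_eq => /eqP | apply/eqP; rewrite om_exp_eq h]. Qed.

Lemma exp_inv_mod a c : omega ^+ a = (omega ^+ c)^-1 <-> ((a + c) %% d = 0)%N.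
Proof.
have c0 : omega ^+ c != 0 by rewrite expf_neq0 // om0.
split => [h|h].
  have : omega ^+ (a + c) = 1 by rewrite exprD h mulVf.
  by move/eqP; rewrite om_pow_eq1 => /eqP.
apply: (mulIf c0); rewrite mulVf // -exprD; apply/eqP; rewrite om_pow_eq1; exact/eqP.
Qed.

Lemma modh m a E0 i : ((a * (E0 %% m) * i) %% m = (a * E0 * i) %% m)%N.
Proof. by rewrite mulnAC [in RHS]mulnAC modnMmr. Qed.

Lemma nz_of_neq i : Rf k (omega ^+ (i * e)) ^+ (s * t) != 0 -> Rf k (omega ^+ (i * e)) != 0.
Proof. by apply: contra_neq => ->; rewrite expr0n eqn0Ngt muln_gt0 s_gt0 t0. Qed.

Lemma zpow1 (i : nat) : omega ^ (2 * 1 * (E%:Z) * (i%:Z))%R = omega ^+ (2 * E * i).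
Proof. by rewrite mulr1 -!PoszM. Qed.

Lemma zpowm1 (i : nat) : omega ^ (2 * (-1) * (E%:Z) * (i%:Z))%R = (omega ^+ (2 * E * i))^-1.
Proof. rewrite mulrN1 !mulNr -!PoszM -exprz_inv; exact: exprVn. Qed.

Definition LHS (i : nat) :=
  ((omega ^+ (i * k * e) - omega ^- (i * k * e)) / (omega ^+ (i * e) - omega ^- (i * e))) ^+ (s * t).

Lemma good_sym i j : (0 < j < d)%N -> i = (d - j)%N -> GOOD j -> GOOD i.
Proof.
move=> hj -> gj; apply: good_of_nz; rewrite Rf_sym_nz //; apply: nz_of_neq.
by rewrite gj expf_neq0 // om0.
Qed.

Lemma bb_at i j : (0 < j < d)%N -> i = (d - j)%N -> bb i = bb j.
Proof. by move=> hj ->; rewrite bb_sym. Qed.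

Lemma eps1_i i : (0 < i < d)%N -> GOOD i -> (bb i = (2 * (E %% d) * i) %% d)%N ->
  LHS i = omega ^ (2 * 1 * (E%:Z) * (i%:Z))%R.
Proof.
by move=> hi g h; rewrite /LHS lhs_eq good_bb // zpow1; apply/exp_eq_mod; rewrite h modh modn_mod.
Qed.

Lemma epsm1_i i : (0 < i < d)%N -> GOOD i -> ((bb i + 2 * (E %% d) * i) %% d = 0)%N ->
  LHS i = omega ^ (2 * (-1) * (E%:Z) * (i%:Z))%R.
Proof.
move=> hi g h; rewrite /LHS lhs_eq good_bb // zpowm1; apply/exp_inv_mod.
by rewrite -modnDmr -modh modnDmr.
Qed.

Lemma eps1_i' i : (0 < i < d)%N -> LHS i = omega ^ (2 * 1 * (E%:Z) * (i%:Z))%R ->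
  GOOD i /\ (bb i = (2 * (E %% d) * i) %% d)%N.
Proof.
rewrite /LHS lhs_eq zpow1 => hi h.
have g : GOOD i by apply: good_of_nz; apply: nz_of_neq; rewrite h expf_neq0 // om0.
split => //; move: h; rewrite good_bb // => /exp_eq_mod.
by rewrite modn_small ?bb_lt // => ->; rewrite modh.
Qed.

Lemma epsm1_i' i : (0 < i < d)%N -> LHS i = omega ^ (2 * (-1) * (E%:Z) * (i%:Z))%R ->
  GOOD i /\ ((bb i + 2 * (E %% d) * i) %% d = 0)%N.
Proof.
rewrite /LHS lhs_eq zpowm1 => hi h.
have g : GOOD i by apply: good_of_nz; apply: nz_of_neq; rewrite h invr_neq0 // expf_neq0 // om0.
split => //; move: h; rewrite good_bb // => /exp_inv_mod.
by rewrite -modnDmr -modh modnDmr.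
Qed.

Lemma partD (HE : (gcdn d E <= 2)%N) : d = 7%N -> coprime r s ->
  (bijective (fun x : F => f.[x]) <->
   (star_cond (F := F) d k (s * t) \/
    exists eps : int, (eps = 1 \/ eps = -1) /\
      forall i : nat, i \in [:: 1; 2; 4]%N -> LHS i = omega ^ (2 * eps * (E%:Z) * (i%:Z))%R)).
Proof.
move=> d7 cp.
have hE7 : (E %% 7 != 0)%N by have := Emod HE; rewrite d7.
have c7 := comb7 _ _ bb0 bb_lt bb_sym E d7 hE7.
have r1 : (0 < 1 < d)%N by rewrite d7.
have r2 : (0 < 2 < d)%N by rewrite d7.
have r4 : (0 < 4 < d)%N by rewrite d7.
have i3 : 3%N = (d - 4)%N by rewrite d7.
have i5 : 5%N = (d - 2)%N by rewrite d7.
have i6 : 6%N = (d - 1)%N by rewrite d7.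
have allg : GOOD 1 -> GOOD 2 -> GOOD 4 -> forall i, (0 < i < d)%N -> GOOD i.
  move=> g1 g2 g4; case => [|[|[|[|[|[|[|i]]]]]]] //; rewrite ?d7 //= => _.
  - exact: good_sym r4 i3 g4.
  - exact: good_sym r2 i5 g2.
  - exact: good_sym r1 i6 g1.
split.
  move=> /coreL [good inj]; move: inj; rewrite c7 /cond7.
move=> /orP[/orP[h|h]|h].
  - left; apply: star_of_b0 => //.
    case/and3P: h => /eqP h1 /eqP h2 /eqP h4.
    case => [|[|[|[|[|[|[|i]]]]]]] //; rewrite ?d7 //= => _.
    + by rewrite (bb_at _ _ r4 i3).
    + by rewrite (bb_at _ _ r2 i5).
    + by rewrite (bb_at _ _ r1 i6).
  - right; exists 1; split; first by left.
    case/and3P: h => /eqP h1 /eqP h2 /eqP h4.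
    move=> i; rewrite !inE => /or3P[] /eqP ->; apply: eps1_i => //; try exact: good; by rewrite d7.
  - right; exists (-1); split; first by right.
    case/and3P: h => /eqP h1 /eqP h2 /eqP h4.
    move=> i; rewrite !inE => /or3P[] /eqP ->; apply: epsm1_i => //; try exact: good; by rewrite d7.
case => [st|[eps [heps H]]]; first exact: partA.
case: heps => ?; subst eps.
- have [g1 h1] := eps1_i' _ r1 (H 1%N isT).
  have [g2 h2] := eps1_i' _ r2 (H 2%N isT).
  have [g4 h4] := eps1_i' _ r4 (H 4%N isT).
  apply: (coreR cp (allg g1 g2 g4)); rewrite c7 /cond7.
  by move: h1 h2 h4; rewrite d7 => -> -> ->; rewrite !eqxx orbT.
- have [g1 h1] := epsm1_i' _ r1 (H 1%N isT).
  have [g2 h2] := epsm1_i' _ r2 (H 2%N isT).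
  have [g4 h4] := epsm1_i' _ r4 (H 4%N isT).
  apply: (coreR cp (allg g1 g2 g4)); rewrite c7 /cond7.
  by move: h1 h2 h4; rewrite d7 => -> -> ->; rewrite !eqxx !orbT.
Qed.

Lemma epsE j w : (0 < j < d)%N -> GOOD j -> (bb j = (E %% d * w) %% d)%N ->
  LHS j = omega ^+ (E * w).
Proof.
by move=> hj g h; rewrite /LHS lhs_eq good_bb //; apply/exp_eq_mod; rewrite h modn_mod modnMml.
Qed.

Lemma epsE' j w : (0 < j < d)%N -> LHS j = omega ^+ (E * w) ->
  GOOD j /\ (bb j = (E %% d * w) %% d)%N.
Proof.
rewrite /LHS lhs_eq => hj h.
have g : GOOD j by apply: good_of_nz; apply: nz_of_neq; rewrite h expf_neq0 // om0.
split => //; move: h; rewrite good_bb // => /exp_eq_mod.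
by rewrite modn_small ?bb_lt // => ->; rewrite modnMml.
Qed.

Lemma partE (HE : (gcdn d E <= 2)%N) : d = 11%N -> coprime r s ->
  (bijective (fun x : F => f.[x]) <->
   (star_cond (F := F) d k (s * t) \/
    exists psi : 'F_11 -> 'F_11, C11 psi /\
      forall i : 'F_11, nzsq11 i -> LHS (val i) = omega ^+ (E * val (psi i)))).
Proof.
move=> d11 cp.
have hE11 : (E %% 11 != 0)%N by have := Emod HE; rewrite d11.
have r1 : (0 < 1 < d)%N by rewrite d11.
have r3 : (0 < 3 < d)%N by rewrite d11.
have r4 : (0 < 4 < d)%N by rewrite d11.
have r5 : (0 < 5 < d)%N by rewrite d11.
have r9 : (0 < 9 < d)%N by rewrite d11.
have i2 : 2%N = (d - 9)%N by rewrite d11.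
have i6 : 6%N = (d - 5)%N by rewrite d11.
have i7 : 7%N = (d - 4)%N by rewrite d11.
have i8 : 8%N = (d - 3)%N by rewrite d11.
have i10 : 10%N = (d - 1)%N by rewrite d11.
have v1 : val (1 : 'F_11) = 1%N by [].
have v3 : val (3 : 'F_11) = 3%N by [].
have v4 : val (4 : 'F_11) = 4%N by [].
have v5 : val (5 : 'F_11) = 5%N by [].
have v9 : val (9 : 'F_11) = 9%N by [].
split.
  move=> /coreL [good inj].
  move: (comb11 _ _ bb0 bb_lt bb_sym E d11 inj) => /orP[h|].
  - left; apply: star_of_b0 => //.
    case/and5P: h => /eqP h1 /eqP h3 /eqP h4 /eqP h5 /eqP h9.
    case => [|[|[|[|[|[|[|[|[|[|[|i]]]]]]]]]]] //; rewrite ?d11 //= => _.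
    + by rewrite (bb_at _ _ r9 i2).
    + by rewrite (bb_at _ _ r5 i6).
    + by rewrite (bb_at _ _ r4 i7).
    + by rewrite (bb_at _ _ r3 i8).
    + by rewrite (bb_at _ _ r1 i10).
  case/hasP => row hrow hm; have [psi [Cp rp]] := tbl_C11 _ hrow.
  right; exists psi; split => //.
  move: hm; rewrite /match11 -rp /rowOf /= => /eqP [h1 h3 h4 h5 h9].
  move=> i /nzsq_sq; rewrite !inE => /orP[/eqP->|/orP[/eqP->|/orP[/eqP->|/orP[/eqP->|/eqP->]]]].
  - by rewrite v1; apply: epsE => //; [exact: good | rewrite d11].
  - by rewrite v3; apply: epsE => //; [exact: good | rewrite d11].
  - by rewrite v4; apply: epsE => //; [exact: good | rewrite d11].
  - by rewrite v5; apply: epsE => //; [exact: good | rewrite d11].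
  - by rewrite v9; apply: epsE => //; [exact: good | rewrite d11].
case => [st|[psi [Cp H]]]; first exact: partA.
have hs j : j \in sq11 -> nzsq11 j by move=> hj; apply: sq_nzsq.
have [g1 h1] := epsE' _ _ r1 (H 1 (hs 1 isT)).
have [g3 h3] := epsE' _ _ r3 (H 3 (hs 3 isT)).
have [g4 h4] := epsE' _ _ r4 (H 4 (hs 4 isT)).
have [g5 h5] := epsE' _ _ r5 (H 5 (hs 5 isT)).
have [g9 h9] := epsE' _ _ r9 (H 9 (hs 9 isT)).
have allg : forall i, (0 < i < d)%N -> GOOD i.
  case => [|[|[|[|[|[|[|[|[|[|[|i]]]]]]]]]]] //; rewrite ?d11 //= => _.
  - exact: good_sym r9 i2 g9.
  - exact: good_sym r5 i6 g5.
  - exact: good_sym r4 i7 g4.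
  - exact: good_sym r3 i8 g3.
  - exact: good_sym r1 i10 g1.
apply: (coreR cp allg).
apply: (comb11b _ _ bb0 bb_lt bb_sym E (rowOf psi) d11 hE11 (C11_tbl _ Cp)).
move: h1 h3 h4 h5 h9; rewrite d11 /match11 /rowOf /= => -> -> -> -> ->.
by [].
Qed.
End Main.


Theorem corollary3p5 (F : finFieldType) (p : nat) (r v k t : nat)
  (omega : F) :
  p \in [pchar F] ->
  (0 < r)%N -> (0 < v)%N -> (0 < k)%N -> (0 < t)%N ->
  let q := #|F| in
  let s := gcdn v q.-1 in
  let d := (q.-1 %/ s)%N in
  let e := (v %/ s)%N in
  let f : {poly F} := fpoly r v k t in
  let E := (2 * r + v * t * (k - 1))%N in
  coprime r s -> coprime d k ->
  (gcdn d E <= 2)%N ->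
  ((k%:Z) ^+ (s * t) = (-1) ^+ ((d + 1) * (r + 1)) %[mod p%:Z])%Z ->
  prime d -> odd d ->
  d.-primitive_root omega ->
  [/\ star_cond (F := F) d k (s * t) -> permutes f,
      d = 3%N -> permutes f,
      d = 5%N -> (permutes f <-> star_cond (F := F) d k (s * t)),
      d = 7%N -> (permutes f <->
        (star_cond (F := F) d k (s * t) \/
         exists eps : int, (eps = 1 \/ eps = -1) /\
           forall i : nat, i \in [:: 1; 2; 4]%N ->
             ((omega ^+ (i * k * e) - omega ^- (i * k * e))
               / (omega ^+ (i * e) - omega ^- (i * e))) ^+ (s * t)
             = omega ^ (2 * eps * (E%:Z) * (i%:Z))))
    & d = 11%N -> (permutes f <->
        (star_cond (F := F) d k (s * t) \/
         exists psi : 'F_11 -> 'F_11, C11 psi /\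
           forall i : 'F_11, nzsq11 i ->
             ((omega ^+ (val i * k * e) - omega ^- (val i * k * e))
               / (omega ^+ (val i * e) - omega ^- (val i * e))) ^+ (s * t)
             = omega ^+ (E * val (psi i))))].
Proof.
move=> pc r0 v0 k0 t0 q s d e f E crs cdk hE hcong pd od pom.
subst E f e d s q.
have K1 : (k%:R : F) ^+ (gcdn v #|F|.-1 * t) = 1.
  have hm : ((-1 : int) ^+ (((#|F|.-1 %/ gcdn v #|F|.-1) + 1) * (r + 1)) = 1).
    have := odd_double_half (#|F|.-1 %/ gcdn v #|F|.-1).+1; rewrite /= od /= add0n addn1 => <-.
    by rewrite -muln2 [(_ * 2)%N]mulnC -mulnA exprM sqrrN !expr1n.
  move: hcong; rewrite hm => /eqP; rewrite eqz_mod_dvd (dvdz_pcharf pc) rmorphB rmorphXn /= rmorph1.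
  by rewrite subr_eq0 => /eqP.
split.
- by apply: (partA _ _ _ _ _ omega).
- by move=> d3; apply: (partA _ _ _ _ _ omega) => //; apply: (star3 _ _ _ _ omega).
- by move=> d5; apply: (partC _ _ _ _ _ omega).
- by move=> d7; apply: (partD _ _ _ _ _ omega).
- by move=> d11; apply: (partE _ _ _ _ _ omega).
Qed.
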